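(* Let $n\ge 2$ be an integer and let $x_1,\dots,x_n>0$ satisfy $\frac1n\sum_{i=1}^n\frac1{x_i}=1$. Then \[ \frac1n\sum_{i=1}^n x_i\le\prod_{i=1}^n x_i, \] with equality if and only if $x_1=\cdots=x_n=1$ when $n\ge3$; when $n=2$, equality holds for all such $x_1,x_2$. *)

(* Defs.v *)
From mathcomp Require Import all_boot all_order all_algebra.

(* Main.v *)
Require Import Defs.
From mathcomp Require Import all_boot all_order all_algebra.
From mathcomp Require Import ring lra.
Import Order.TTheory GRing.Theory Num.Theory.
Local Open Scope ring_scope.

Lemma powmono {R : realFieldType} (k : nat) (a b : R) : 0 <= a -> 0 <= b ->
  0 <= (a ^+ k.+1 - b ^+ k.+1) * (a - b) /\ (a != b -> 0 < (a ^+ k.+1 - b ^+ k.+1) * (a - b)).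
Proof.
move=> ha hb; case: (ltgtP a b) => hab.
- have := ltrXn2r k.+1 ha hab; rewrite /= => h.
  split; [nra | move=> _; nra].
- have := ltrXn2r k.+1 hb hab; rewrite /= => h.
  split; [nra | move=> _; nra].
- by subst; rewrite !subrr mulr0; split => //; rewrite eqxx.
Qed.

Lemma bern {R : realFieldType} (k : nat) (a b : R) : 0 <= a -> 0 <= b ->
  k.+1%:R * a ^+ k * b <= b ^+ k.+1 + k%:R * a ^+ k.+1.
Proof.
move=> ha hb; elim: k => [|k IH]; first by rewrite expr0 expr1 mulr1 mul0r addr0 mul1r.
have [h _] := powmono k a b ha hb.
have IH' := ler_wpM2l ha IH.
rewrite !exprS in IH' h *.
rewrite -[k.+2%:R]natr1 -[k.+1%:R]natr1 in IH' *.
nra.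
Qed.

Lemma bern_strict {R : realFieldType} (k : nat) (a b : R) : 0 <= a -> 0 <= b -> a != b ->
  k.+2%:R * a ^+ k.+1 * b < b ^+ k.+2 + k.+1%:R * a ^+ k.+2.
Proof.
move=> ha hb hab.
have [_ h] := powmono k a b ha hb; have {}h := h hab.
have IH' := ler_wpM2l ha (bern k a b ha hb).
rewrite !exprS in IH' h *.
rewrite -[k.+2%:R]natr1 -[k.+1%:R]natr1 in IH' *.
nra.
Qed.
Lemma agm {R : realFieldType} n (E : 'I_n.+1 -> R) : (forall i, 0 <= E i) ->
  (\prod_i E i <= ((\sum_i E i) / n.+1%:R) ^+ n.+1 ?= iff [forall i, forall j, E i == E j]).
Proof.
move=> hE.
have := @leif_AGM R _ predT E (fun i _ => hE i).
by rewrite cardT size_enum_ord.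
Qed.

Lemma step_facts {R : realFieldType} n (P A S t : R) :
  0 < t -> 0 <= S ->
  P * A <= n.+1%:R * (S / n.+1%:R) ^+ n ->
  P <= (S / n.+1%:R) ^+ n.+1 ->
  (P * t) * (A + t^-1) <= n.+2%:R * ((S + t) / n.+2%:R) ^+ n.+1.
Proof.
move=> ht hS IH hP.
set a := S / n.+1%:R; set b := (S + t) / n.+2%:R.
have ha : 0 <= a by rewrite /a divr_ge0.
have hb : 0 <= b by rewrite /b divr_ge0 // addr_ge0 // ltW.
have hB := bern n a b ha hb.
have et : t = n.+2%:R * b - n.+1%:R * a.
  by rewrite /a /b [n.+2%:R * _]mulrC [n.+1%:R * _]mulrC !divfK ?pnatr_eq0 // addrC addKr.
have -> : (P * t) * (A + t^-1) = t * (P * A) + P.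
  by rewrite mulrDr mulfK ?gt_eqF //; congr (_ + _); rewrite mulrAC mulrC.
have h1 := ler_wpM2l (ltW ht) IH.
rewrite exprS in hP.
apply: (le_trans (lerD h1 hP)).
rewrite {1}et.
set u := a ^+ n.
have -> : (n.+2%:R * b - n.+1%:R * a) * (n.+1%:R * u) + a * u
   = n.+2%:R * (n.+1%:R * u * b - n%:R * (a * u)).
  rewrite -[n.+2%:R]natr1 -[n.+1%:R]natr1; ring.
rewrite ler_pM2l ?ltr0Sn //.
rewrite lerBlDr -exprS; exact: hB.
Qed.

Lemma step_eq {R : realFieldType} k (P A S t : R) :
  0 < t -> 0 <= S ->
  P * A <= k.+2%:R * (S / k.+2%:R) ^+ k.+1 ->
  P <= (S / k.+2%:R) ^+ k.+2 ->
  (P * t) * (A + t^-1) = k.+3%:R * ((S + t) / k.+3%:R) ^+ k.+2 ->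
  P = (S / k.+2%:R) ^+ k.+2 /\ t = S / k.+2%:R.
Proof.
move=> ht hS IH hP heq.
set a := S / k.+2%:R; set b := (S + t) / k.+3%:R.
have ha : 0 <= a by rewrite /a divr_ge0.
have hb : 0 <= b by rewrite /b divr_ge0 // addr_ge0 // ltW.
have et : t = k.+3%:R * b - k.+2%:R * a.
  by rewrite /a /b [k.+3%:R * _]mulrC [k.+2%:R * _]mulrC !divfK ?pnatr_eq0 // addrC addKr.
have E1 : (P * t) * (A + t^-1) = t * (P * A) + P.
  by rewrite mulrDr mulfK ?gt_eqF //; congr (_ + _); rewrite mulrAC mulrC.
rewrite E1 -/a -/b in heq.
have h1 := ler_wpM2l (ltW ht) IH.
set u := a ^+ k.+1.
rewrite -/a -/u in h1.
have E2 : t * (k.+2%:R * u) + a * u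
   = k.+3%:R * (k.+2%:R * u * b - k.+1%:R * (a * u)).
  rewrite et -[k.+3%:R]natr1 -[k.+2%:R]natr1; ring.
have hab : a = b.
  apply/eqP; apply/negPn/negP => nab.
  have hB := bern_strict k a b ha hb nab.
  have : t * (P * A) + P < k.+3%:R * b ^+ k.+2.
    rewrite exprS in hP.
    apply: (le_lt_trans (lerD h1 hP)).
    rewrite E2 ltr_pM2l ?ltr0Sn //.
    by rewrite ltrBlDr -exprS.
  by rewrite heq ltxx.
have hPe : P = a * u.
  apply/eqP; move: hP; rewrite exprS le_eqVlt => /orP [//|hlt].
  have hB := bern k.+1 a b ha hb.
  have : t * (P * A) + P < k.+3%:R * b ^+ k.+2.
    apply: (le_lt_trans (lerD h1 (lexx P))).
    apply: (@lt_le_trans _ _ (t * (k.+2%:R * u) + a * u)); first by rewrite ltrD2l.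
    rewrite E2 ler_pM2l ?ltr0Sn //.
    by rewrite lerBlDr -exprS.
  by rewrite heq ltxx.
split; first by rewrite hPe -exprS.
by rewrite et -hab -mulrBl -[k.+3%:R]natr1 addrAC subrr add0r mul1r.
Qed.

Lemma key {R : realFieldType} n (y : 'I_n.+1 -> R) : (forall i, 0 < y i) ->
  (\prod_i y i) * (\sum_i (y i)^-1) <= n.+1%:R * ((\sum_i y i) / n.+1%:R) ^+ n.
Proof.
elim: n y => [|n IH] y hy.
  by rewrite !big_ord1 mulfV ?gt_eqF // expr0 mulr1.
rewrite !(big_ord_recr n.+1) /=.
apply: step_facts.
- exact: hy.
- by apply: sumr_ge0 => i _; apply: ltW.
- exact: IH.
- by have [] := agm n (fun i => y (widen_ord (leqnSn n.+1) i)) (fun i => ltW (hy _)).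
Qed.

Lemma key_eq {R : realFieldType} k (y : 'I_k.+3 -> R) : (forall i, 0 < y i) ->
  (\prod_i y i) * (\sum_i (y i)^-1) = k.+3%:R * ((\sum_i y i) / k.+3%:R) ^+ k.+2 ->
  exists c, forall i, y i = c.
Proof.
move=> hy.
rewrite !(big_ord_recr k.+2) /=.
set E := fun i : 'I_k.+2 => y (widen_ord (leqnSn k.+2) i).
have hE : forall i, 0 <= E i by move=> i; exact: ltW (hy _).
have hA := agm k.+1 E hE.
move/step_eq => [].
- exact: hy.
- by apply: sumr_ge0 => i _; exact: hE.
- exact: key.
- by have [] := hA.
move=> hPe ht.
have := hA.2; rewrite hPe eqxx => /esym /forallP hall.
have hE0 : forall i, E i = E ord0 by move=> i; have /forallP/(_ ord0)/eqP := hall i.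
have hS : (\sum_(i < k.+2) E i) / k.+2%:R = E ord0.
  rewrite (eq_bigr (fun _ => E ord0)); last by move=> i _; exact: hE0.
  by rewrite sumr_const card_ord -[E ord0 *+ _]mulr_natr mulfK ?pnatr_eq0.
exists (E ord0) => i.
case: (unliftP ord_max i) => [j ->|->].
- have -> : lift ord_max j = widen_ord (leqnSn k.+2) j by apply: val_inj; exact: lift_max.
  exact: (hE0 j).
- by rewrite ht hS.
Qed.

Lemma aux {R : realFieldType} m (x : 'I_m.+1 -> R) (hx : forall i, 0 < x i)
  (hsum : m.+1%:R^-1 * (\sum_(i < m.+1) (x i)^-1) = 1) :
  [/\ \sum_i (x i)^-1 = m.+1%:R,
      (\prod_i (x i)^-1) * (\sum_i ((x i)^-1)^-1) = (\prod_i x i)^-1 * \sum_i x i,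
      0 < \prod_i x i &
      (m.+1%:R^-1 * (\sum_i x i) = \prod_i x i <-> (\prod_i x i)^-1 * \sum_i x i = m.+1%:R)].
Proof.
have hN : m.+1%:R != 0 :> R by rewrite pnatr_eq0.
have hpos : 0 < \prod_i x i by apply: prodr_gt0 => i _.
split.
- by move: hsum => /(congr1 (fun z => m.+1%:R * z)); rewrite mulrA mulfV // mul1r mulr1.
- by rewrite prodfV; congr (_ * _); apply: eq_bigr => i _; rewrite invrK.
- exact: hpos.
- split => h.
  + have hS : \sum_i x i = m.+1%:R * \prod_i x i by rewrite -h mulrA mulfV // mul1r.
    by rewrite hS mulrCA mulVf ?gt_eqF // mulr1.
  + have hS : \sum_i x i = \prod_i x i * m.+1%:R by rewrite -h mulrA mulfV ?gt_eqF // mul1r.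
    by rewrite hS mulrCA mulVf // mulr1.
Qed.

Theorem lemma4p4 (R : realFieldType) (n : nat) (hn : (2 <= n)%N)
  (x : 'I_n -> R) (hx : forall i, 0 < x i)
  (hsum : n%:R^-1 * (\sum_(i < n) (x i)^-1) = 1) :
  n%:R^-1 * (\sum_(i < n) x i) <= \prod_(i < n) x i /\
  ((3 <= n)%N ->
     (n%:R^-1 * (\sum_(i < n) x i) = \prod_(i < n) x i <-> forall i, x i = 1)) /\
  (n = 2%N -> n%:R^-1 * (\sum_(i < n) x i) = \prod_(i < n) x i).
Proof.
case: n hn x hx hsum => [//|m] hn x hx hsum.
have [hsy hPA hpos heqv] := aux m x hx hsum.
have hy : forall i, 0 < (x i)^-1 by move=> i; rewrite invr_gt0.
split; [|split].
- have := key m _ hy; rewrite hsy mulfV ?pnatr_eq0 // expr1n mulr1 hPA => h.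
  rewrite -(ler_pM2l hpos) mulrA mulfV ?gt_eqF // mul1r in h.
  by rewrite mulrC ler_pdivrMr ?ltr0Sn // mulrC.
- move=> h3; split.
  + case: m h3 x hx hsum hn hsy hPA hpos heqv hy => [//|[//|k]] _ x hx hsum _ hsy hPA hpos heqv hy.
    move/heqv => h.
    have [c hc] : exists c, forall i, (x i)^-1 = c.
      apply: key_eq => //.
      by rewrite hsy mulfV ?pnatr_eq0 // expr1n mulr1 hPA.
    move: hsy; rewrite (eq_bigr (fun _ => c)); last by move=> i _.
    rewrite sumr_const card_ord -[c *+ _]mulr_natr -{2}[k.+3%:R]mul1r.
    move/(mulIf _) => hc1; have {}hc1 : c = 1 by apply: hc1; rewrite pnatr_eq0.
    by move=> i; apply/eqP; rewrite -invr_eq1 hc hc1.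
  + move=> h1.
    rewrite (eq_bigr (fun _ => 1)); last by move=> i _.
    rewrite sumr_const card_ord big1; last by move=> i _; exact: h1.
    by rewrite -[1 *+ _]/(m.+1%:R) mulVf ?pnatr_eq0.
- case: m x hx hsum hn {hsy hPA hpos heqv hy} => [//|[|//]] x hx hsum _ _.
  rewrite !big_ord_recl !big_ord0 addr0 in hsum *; rewrite addr0 mulr1.
  have h0 := hx ord0; have h1 := hx (lift ord0 ord0).
  set a := x ord0 in hsum h0 *; set b := x (lift ord0 ord0) in hsum h1 *.
  have e : a + b = (a^-1 + b^-1) * (a * b).
    by field; rewrite ?gt_eqF.
  have e2 : a^-1 + b^-1 = 2.
    have two : (2:R) != 0 by rewrite pnatr_eq0.
    by move: hsum => /(congr1 (fun z => 2 * z)); rewrite mulrA (mulfV two) mul1r mulr1.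
  have two : (2:R) != 0 by rewrite pnatr_eq0.
  by rewrite e e2 mulrA (mulVf two) mul1r.
Qed.
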